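(* Let $X=[0,\infty)\subset\mathbb{R}$ and $\mathcal{A}=\{\alpha_1,\dots,\alpha_m\}\subset\mathbb{R}$ with $\alpha_1<\cdots<\alpha_m$; identify $\mathbb{R}^{\mathcal{A}}$ with $\mathbb{R}^m$ with standard basis $\delta_1,\dots,\delta_m$. Then the set of normalized reduced $[0,\infty)$-circuits of $\mathcal{A}$ is \[\Lambda^\star_{[0,\infty)}(\mathcal{A})=\{\delta_2-\delta_1\}\cup\Big\{\frac{\alpha_{i+1}-\alpha_i}{\alpha_{i+1}-\alpha_{i-1}}\delta_{i-1}+\frac{\alpha_i-\alpha_{i-1}}{\alpha_{i+1}-\alpha_{i-1}}\delta_{i+1}-\delta_i\ :\ 1<i<m\Big\}\] (for $m\ge2$).
   Context: For a nonempty closed convex $X\subset\mathbb{R}^n$ and nonempty finite $\mathcal{A}\subset\mathbb{R}^n$: $\mathcal{A}\nu=\sum_\alpha\alpha\nu_\alpha$ for $\nu\in\mathbb{R}^{\mathcal{A}}$; $\sigma_X(y)=\sup\{y^Tx:x\in X\}\in\mathbb{R}\cup\{+\infty\}$; for $\beta\in\mathcal{A}$, $N_\beta=\{\nu\in\mathbb{R}^{\mathcal{A}}:\nu_\alpha\ge0\ \forall\alpha\neq\beta,\ \sum_\alpha\nu_\alpha=0\}$. A vector $\nu^\star\in N_\beta$ is an $X$-circuit of $\mathcal{A}$ if (1) $\nu^\star\neq0$, (2) $\sigma_X(-\mathcal{A}\nu^\star)<\infty$, and (3) $\nu^\star$ cannot be written as a convex combination of two non-proportional vectors $\nu^{(1)},\nu^{(2)}\in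 N_\beta$ such that the map $\nu\mapsto\sigma_X(-\mathcal{A}\nu)$ is affine on the segment $[\nu^{(1)},\nu^{(2)}]$. $\Lambda_X(\mathcal{A})$ is the set of all $X$-circuits normalized so that the unique negative entry equals $-1$. The functional form of $\lambda\in\Lambda_X(\mathcal{A})$ is $\phi_\lambda=(\lambda,\sigma_X(-\mathcal{A}\lambda))\in\mathbb{R}^{\mathcal{A}}\times\mathbb{R}$; the circuit graph is $G_X(\mathcal{A})=\operatorname{cone}(\{\phi_\lambda:\lambda\in\Lambda_X(\mathcal{A})\}\cup\{(0,1)\})$; and the normalized reduced $X$-circuits $\Lambda_X^\star(\mathcal{A})$ are those $\lambda\in\Lambda_X(\mathcal{A})$ for which $\{t\phi_\lambda:t\ge0\}$ is an extreme ray of $G_X(\mathcal{A})$. *)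

(* Defs.v *)
From HB Require Import structures.
From mathcomp Require Import all_boot all_order all_algebra.
From mathcomp Require Import all_classical all_reals ereal.
Set Implicit Arguments. Unset Strict Implicit. Unset Printing Implicit Defensive.
Import Order.TTheory GRing.Theory Num.Theory.
Local Open Scope ring_scope.
Local Open Scope classical_set_scope.

(* Ambient dimension n = 1: X is a subset of R, the finite support set
   A = {alpha_1,...,alpha_m} is given by an indexing alpha : 'I_m -> R,
   and R^A is identified with functions 'I_m -> R. *)

Section Circuits.
Variables (R : realType) (m : nat).
Implicit Types (X : set R) (alpha : 'I_m -> R) (nu : 'I_m -> R).

Definition Amul alpha nu : R := \sum_(a < m) alpha a * nu a.

Definition sigma X (y : R) : \bar R := ereal_sup [set (y * x)%:E | x in X].

Definition sigmaA X alpha nu : \bar R := sigma X (- Amul alpha nu).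

Definition Ncone (beta : 'I_m) : set ('I_m -> R) :=
  [set nu | (forall a, a != beta -> 0 <= nu a) /\ \sum_(a < m) nu a = 0].

Definition seg_point (nu1 nu2 : 'I_m -> R) (t : R) : 'I_m -> R :=
  fun a => (1 - t) * nu1 a + t * nu2 a.

Definition proportional (nu1 nu2 : 'I_m -> R) : Prop :=
  (exists c : R, nu1 = (fun a => c * nu2 a)) \/
  (exists c : R, nu2 = (fun a => c * nu1 a)).

Definition affine_on_segment X alpha (nu1 nu2 : 'I_m -> R) : Prop :=
  exists c0 c1 : R, forall t : R, 0 <= t <= 1 ->
    sigmaA X alpha (seg_point nu1 nu2 t) = (c0 + c1 * t)%:E.

Definition is_circuit X alpha (beta : 'I_m) (nu : 'I_m -> R) : Prop :=
  [/\ Ncone beta nu,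
      nu <> (fun _ => 0),
      (sigmaA X alpha nu < +oo)%E &
      ~ (exists (nu1 nu2 : 'I_m -> R) (t : R),
           [/\ Ncone beta nu1 /\ Ncone beta nu2, 0 < t < 1,
               ~ proportional nu1 nu2,
               nu = seg_point nu1 nu2 t &
               affine_on_segment X alpha nu1 nu2])].

Definition Lambda X alpha : set ('I_m -> R) :=
  [set nu | exists beta, is_circuit X alpha beta nu /\ nu beta = -1].

Definition functional_form X alpha (lam : 'I_m -> R) : ('I_m -> R) * R :=
  (lam, fine (sigmaA X alpha lam)).

Definition cone (S : set (('I_m -> R) * R)) : set (('I_m -> R) * R) :=
  [set p | exists (k : nat) (c : 'I_k -> R) (s : 'I_k -> ('I_m -> R) * R),
     [/\ forall i, 0 <= c i, forall i, S (s i),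
         p.1 = (fun a => \sum_(i < k) c i * (s i).1 a) &
         p.2 = \sum_(i < k) c i * (s i).2]].

Definition circuit_graph X alpha : set (('I_m -> R) * R) :=
  cone ([set functional_form X alpha lam | lam in Lambda X alpha]
        `|` [set ((fun _ => 0), 1)]).

Definition ray (p : ('I_m -> R) * R) : set (('I_m -> R) * R) :=
  [set q | exists t : R, 0 <= t /\ q = ((fun a => t * p.1 a), t * p.2)].

Definition padd (p q : ('I_m -> R) * R) : ('I_m -> R) * R :=
  ((fun a => p.1 a + q.1 a), p.2 + q.2).

Definition extreme_ray (C : set (('I_m -> R) * R)) (p : ('I_m -> R) * R) : Prop :=
  [/\ p <> ((fun _ => 0), 0), ray p `<=` C &
      forall x y, C x -> C y -> ray p (padd x y) -> ray p x /\ ray p y].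

Definition Lambda_star X alpha : set ('I_m -> R) :=
  [set lam | Lambda X alpha lam /\
             extreme_ray (circuit_graph X alpha) (functional_form X alpha lam)].

Definition delta (i : 'I_m) : 'I_m -> R := fun j => if j == i then 1 else 0.

End Circuits.
Arguments delta {R m} i _.

(* Main.v *)
Require Import Defs.
From HB Require Import structures.
From mathcomp Require Import all_boot all_order all_algebra.
From mathcomp Require Import all_classical all_reals ereal.
From mathcomp Require Import ring lra zify.
Import Order.TTheory GRing.Theory Num.Theory.
Local Open Scope ring_scope.
Local Open Scope classical_set_scope.

Section S1.
Variable R : realType.

Lemma sigma_nonpos (y : R) : y <= 0 -> sigma [set x : R | 0 <= x] y = 0%E.
Proof.
move=> hy; apply/eqP; rewrite eq_le; apply/andP; split.
  apply: ge_ereal_sup => _ [x hx <-]; rewrite lee_fin.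
  by rewrite /= in hx; nra.
apply: le_ereal_sup_tmp; exists 0%E => //; exists 0 => //=; by rewrite mulr0.
Qed.

Lemma sigma_pos (y : R) : 0 < y -> sigma [set x : R | 0 <= x] y = +oo%E.
Proof.
move=> hy.
have H : forall r : R, (r%:E <= sigma [set x : R | (0 <= x)%R] y)%E.
  move=> r; apply: le_ereal_sup_tmp; exists (`|r|%:E).
    exists (`|r| / y); first by rewrite /= divr_ge0 // ltW.
    by rewrite mulrC -mulrA mulVf ?mulr1 // gt_eqF.
  by rewrite lee_fin ler_norm.
move: H; case: (sigma _ y) => //.
  by move=> r /(_ (r + 1)); rewrite lee_fin => H0; exfalso; lra.
by move=> /(_ 0); rewrite leeNy_eq.
Qed.
End S1.

Section Main.
Variables (R : realType) (m : nat) (alpha : 'I_m.+1 -> R).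
Hypothesis hm : (1 <= m)%N.
Hypothesis halpha : forall i j : 'I_m.+1, (i < j)%N -> alpha i < alpha j.

Definition al (n : nat) : R := alpha (inord n).
Definition dN (n : nat) (a : 'I_m.+1) : R := if val a == n then 1 else 0.
Definition hinge (p x : R) : R := if p <= x then x - p else 0.
Definition H (k : nat) (nu : 'I_m.+1 -> R) : R :=
  \sum_a nu a * hinge (al k) (alpha a).
Definition gen (k : nat) : 'I_m.+1 -> R := fun a =>
  if k == 0%N then dN 1 a - dN 0 a else
  (al k.+1 - al k) / (al k.+1 - al k.-1) * dN k.-1 a
  + (al k - al k.-1) / (al k.+1 - al k.-1) * dN k.+1 a - dN k a.

Lemma al_lt i j : (i < j)%N -> (j <= m)%N -> al i < al j.
Proof.
move=> hij hj; apply: (halpha (inord i) (inord j)). rewrite (@inordK m i); last lia. rewrite (@inordK m j); lia.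
Qed.

Lemma al_le i j : (i <= j)%N -> (j <= m)%N -> al i <= al j.
Proof.
rewrite leq_eqVlt => /orP[/eqP -> //|hij] hj; exact/ltW/al_lt.
Qed.

Lemma alpha_al (a : 'I_m.+1) : alpha a = al a.
Proof. by rewrite /al inord_val. Qed.

Lemma eq_inord (a : 'I_m.+1) n : (n <= m)%N -> (a == inord n) = (val a == n).
Proof.
move=> hn; apply/eqP/eqP => [->|h]; first by rewrite /= inordK.
by apply: val_inj; rewrite /= inordK.
Qed.

Lemma sum_dN n (f : 'I_m.+1 -> R) : (n <= m)%N ->
  \sum_a dN n a * f a = f (inord n).
Proof.
move=> hn; rewrite (bigD1 (inord n)) //= big1 ?addr0.
  by rewrite /dN /= inordK // eqxx mul1r.
move=> a; rewrite eq_inord // /dN => /negbTE ->; by rewrite mul0r.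
Qed.

Lemma gen_sum k (f : 'I_m.+1 -> R) : (k < m)%N ->
  \sum_a gen k a * f a =
  if k == 0%N then f (inord 1) - f (inord 0) else
  (al k.+1 - al k) / (al k.+1 - al k.-1) * f (inord k.-1)
  + (al k - al k.-1) / (al k.+1 - al k.-1) * f (inord k.+1) - f (inord k).
Proof.
move=> hk; rewrite /gen; have [k0|k0] := eqVneq k 0%N; first subst k.
  under eq_bigr do rewrite mulrBl.
  by rewrite sumrB !sum_dN.
under eq_bigr do rewrite mulrBl mulrDl -!mulrA.
rewrite sumrB big_split -!mulr_sumr /= !sum_dN //. all: try lia. by rewrite !mulrA.
Qed.

Lemma hingeN i j : (i <= m)%N -> (j <= m)%N ->
  hinge (al j) (al i) = if (j <= i)%N then al i - al j else 0.
Proof.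
move=> hi hj; rewrite /hinge; case: leqP => h.
  by rewrite al_le.
by rewrite leNgt al_lt.
Qed.


Lemma gen_sum0 k : (k < m)%N -> \sum_a gen k a = 0.
Proof.
move=> hk; have := gen_sum k (fun _ => 1) hk.
under eq_bigr do rewrite mulr1.
move=> ->; case: eqP => k0; first by rewrite subrr.
have : al k.-1 < al k.+1 by apply: al_lt; lia.
move=> h; field; rewrite subr_eq0; apply/eqP => e; by move: h; rewrite e ltxx.
Qed.

Lemma gen_A k : (k < m)%N -> 0 <= Amul alpha (gen k).
Proof.
move=> hk; rewrite /Amul; under eq_bigr do rewrite mulrC.
rewrite gen_sum //; case: eqP => k0.
  rewrite subr_ge0; apply: al_le; lia.
have h : al k.-1 < al k.+1 by apply: al_lt; lia.
rewrite -/(al _) -/(al _) -/(al _).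
suff -> : (al k.+1 - al k) / (al k.+1 - al k.-1) * al k.-1 +
  (al k - al k.-1) / (al k.+1 - al k.-1) * al k.+1 - al k = 0 by [].
field; rewrite subr_eq0; apply/eqP => e; by move: h; rewrite e ltxx.
Qed.

Lemma gen_at k : (k < m)%N -> gen k (inord k) = -1.
Proof.
move=> hk; rewrite /gen /dN /= !inordK; try lia.
case: eqP => k0; first by subst k; rewrite /= sub0r.
have -> : (k == k.-1) = false by apply/eqP; lia.
have -> : (k == k.+1) = false by apply/eqP; lia.
by rewrite eqxx !mulr0 add0r sub0r.
Qed.

Lemma gen_ge0 k (a : 'I_m.+1) : (k < m)%N -> val a != k -> 0 <= gen k a.
Proof.
move=> hk ha; rewrite /gen /dN (negbTE ha).
case: eqP => k0.
  subst k; rewrite (negbTE ha) subr0; by case: ifP.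
have hl : al k.-1 < al k by apply: al_lt; lia.
have hr : al k < al k.+1 by apply: al_lt; lia.
rewrite subr0; apply: addr_ge0; apply: mulr_ge0; try (by case: ifP);
  apply: divr_ge0; lra.
Qed.

Lemma Hpos k : (k < m)%N -> 0 < H k (gen k).
Proof.
move=> hk; rewrite /H; under eq_bigr do rewrite alpha_al.
rewrite gen_sum //.
rewrite !inordK; try lia.
rewrite !hingeN; try lia.
case: eqP => k0.
  subst k; rewrite /= subrr subr0 subr_gt0; apply: al_lt; lia.
have hl : al k.-1 < al k by apply: al_lt; lia.
have hr : al k < al k.+1 by apply: al_lt; lia.
have -> : (k <= k.-1)%N = false by lia.
rewrite leqnn ltnW // mulr0 add0r subrr subr0.
apply: mulr_gt0; last lra.
apply: divr_gt0; lra.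
Qed.

Lemma Hgen0 j k : (j < m)%N -> (k < m)%N -> j != k -> H j (gen k) = 0.
Proof.
move=> hj hk hjk; rewrite /H; under eq_bigr do rewrite alpha_al.
rewrite gen_sum //.
rewrite !inordK; try lia.
rewrite !hingeN; try lia.
case: eqP => k0.
  subst k; case: (leqP j 1) => h1.
    have -> : j = 1%N by lia.
    by rewrite subrr ltnn subr0.
  have -> : (j <= 0)%N = false by lia.
  by rewrite subr0.
have hl : al k.-1 < al k by apply: al_lt; lia.
have hr : al k < al k.+1 by apply: al_lt; lia.
case: (ltnP j k) => h.
  have -> : (j <= k.-1)%N = true by lia.
  have -> : (j <= k.+1)%N = true by lia.
  have -> : (j <= k)%N = true by lia.
  have hne : al k.+1 - al k.-1 != 0 by rewrite subr_eq0 gt_eqF // (lt_trans hl hr).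
  clear hjk k0 h. field. exact: hne.
have -> : (j <= k.-1)%N = false by lia.
have -> : (j <= k)%N = false by lia.
case: (leqP j k.+1) => h2.
  have -> : j = k.+1 by lia.
  by rewrite subrr !mulr0 !addr0 subr0.
by rewrite !mulr0 !addr0 subr0.
Qed.


Lemma Hlin j (x y : R) (u v : 'I_m.+1 -> R) :
  H j (fun a => x * u a + y * v a) = x * H j u + y * H j v.
Proof.
rewrite /H !mulr_sumr -big_split; apply: eq_bigr => a _ /=.
by rewrite mulrDl !mulrA.
Qed.

Lemma Slin (x y : R) (u v : 'I_m.+1 -> R) :
  \sum_a (x * u a + y * v a) = x * \sum_a u a + y * \sum_a v a.
Proof. by rewrite big_split /= -!mulr_sumr. Qed.

Lemma Alin (x y : R) (u v : 'I_m.+1 -> R) :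
  Amul alpha (fun a => x * u a + y * v a) = x * Amul alpha u + y * Amul alpha v.
Proof.
rewrite /Amul !mulr_sumr -big_split; apply: eq_bigr => a _ /=.
by rewrite mulrDr !mulrA [alpha a * x]mulrC [alpha a * y]mulrC.
Qed.

Lemma hinge_sub (p x y : R) :
  (if p <= y then 1 else 0) * (x - y) + hinge p y <= hinge p x.
Proof.
rewrite /hinge; case: ifP => hy; case: ifP => hx.
- lra.
- move/negbT: hx; rewrite -ltNge => hx; lra.
- move/negbT: hy; rewrite -ltNge => hy; lra.
- lra.
Qed.

Lemma Ppos beta (nu : 'I_m.+1 -> R) p : Ncone beta nu -> 0 <= Amul alpha nu ->
  0 <= \sum_a nu a * hinge p (alpha a).
Proof.
move=> [hnn hs] hA.
set s := (if p <= alpha beta then 1 else 0 : R).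
have hs0 : 0 <= s by rewrite /s; case: ifP.
apply: (@le_trans _ _ (\sum_a (s * (nu a * alpha a) + (- s * alpha beta + hinge p (alpha beta)) * nu a))).
  rewrite big_split /= -mulr_sumr -mulr_sumr hs mulr0 addr0.
  apply: mulr_ge0 => //; move: hA; rewrite /Amul.
  by under eq_bigr do rewrite mulrC.
apply: ler_sum => a _.
have [->|hab] := eqVneq a beta.
  rewrite /s; case: ifP; lra.
have := hinge_sub p (alpha a) (alpha beta); rewrite -/s => h.
have := hnn a hab => hn.
nra.
Qed.

Lemma Hge0 beta (nu : 'I_m.+1 -> R) j : Ncone beta nu -> 0 <= Amul alpha nu ->
  0 <= H j nu.
Proof. exact: Ppos. Qed.

Lemma injL (u : 'I_m.+1 -> R) : \sum_a u a = 0 ->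
  (forall j, (j < m)%N -> H j u = 0) -> forall a, u a = 0.
Proof.
move=> hs hH.
have claim : forall n (a : 'I_m.+1), (m.+1 <= a + n)%N -> (0 < a)%N -> u a = 0.
  elim=> [|n IH] a ha a0; first by have := ltn_ord a; lia.
  case: (leqP m.+1 (a + n)) => h; first exact: IH.
  have hj : (a.-1 < m)%N by have := ltn_ord a; lia.
  have := hH _ hj; rewrite /H (bigD1 a) //= big1 ?addr0.
    rewrite alpha_al hingeN; try lia.
    have -> : (a.-1 <= a)%N by lia.
    move/eqP; rewrite mulf_eq0 => /orP[/eqP //|].
    rewrite subr_eq0 => /eqP e.
    have : al a.-1 < al a by apply: al_lt; lia.
    by rewrite e ltxx.
  move=> b hb; case: (ltngtP b a) => hba.
  - rewrite alpha_al hingeN; try lia.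
    case: leqP => hh; last by rewrite mulr0.
    have -> : (nat_of_ord b) = a.-1 by lia.
    by rewrite subrr mulr0.
  - rewrite IH ?mul0r //; lia.
  - have e : b = a by apply: val_inj.
    by move: hb; rewrite e eqxx.
move=> a; case: (posnP a) => a0; last by apply: (claim m.+1) => //; lia.
move: hs; rewrite (bigD1 a) //= big1 ?addr0 //.
move=> b hb; apply: (claim m.+1); first lia.
rewrite lt0n; apply: contra hb => /eqP b0.
apply/eqP; apply: val_inj; by rewrite /= b0 a0.
Qed.

Lemma multM k (nu : 'I_m.+1 -> R) : (k < m)%N -> \sum_a nu a = 0 ->
  (forall j, (j < m)%N -> j != k -> H j nu = 0) ->
  forall a, nu a = H k nu / H k (gen k) * gen k a.
Proof.
move=> hk hs hH a.
set c := H k nu / H k (gen k).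
have hp := Hpos k hk.
have hu : forall b, 1 * nu b + (- c) * gen k b = 0.
  apply: injL.
  - by rewrite Slin hs gen_sum0 // !mulr0 addr0.
  - move=> j hj; rewrite Hlin mul1r.
    have [->|hjk] := eqVneq j k.
      by rewrite /c mulNr divfK ?subrr // gt_eqF.
    by rewrite hH // Hgen0 // mulr0 addr0.
move: (hu a); rewrite mul1r mulNr => /eqP; rewrite subr_eq0 => /eqP //.
Qed.


Notation S0 := [set x : R | 0 <= x].

Lemma sigmaA_fin nu : 0 <= Amul alpha nu -> sigmaA S0 alpha nu = 0%E.
Proof. by move=> h; rewrite /sigmaA sigma_nonpos // oppr_le0. Qed.

Lemma sigmaA_lt nu : (sigmaA S0 alpha nu < +oo)%E -> 0 <= Amul alpha nu.
Proof.
move=> h; rewrite leNgt; apply/negP => hlt; move: h.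
by rewrite /sigmaA sigma_pos ?ltxx // oppr_gt0.
Qed.

Lemma affine_imp nu1 nu2 : affine_on_segment S0 alpha nu1 nu2 ->
  0 <= Amul alpha nu1 /\ 0 <= Amul alpha nu2.
Proof.
move=> [c0 [c1 h]].
have e0 : seg_point nu1 nu2 0 = nu1.
  by apply/funext => a; rewrite /seg_point subr0 mul1r mul0r addr0.
have e1 : seg_point nu1 nu2 1 = nu2.
  by apply/funext => a; rewrite /seg_point subrr mul1r mul0r add0r.
split; apply: sigmaA_lt.
  by rewrite -e0 h ?ltry // lexx ler01.
by rewrite -e1 h ?ltry // lexx ler01.
Qed.

Lemma mix0 (a b x y : R) : 0 < a -> 0 < b -> 0 <= x -> 0 <= y ->
  a * x + b * y = 0 -> x = 0 /\ y = 0.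
Proof. move=> ha hb hx hy h; split; nra. Qed.

Lemma gen_circuit k : (k < m)%N -> is_circuit S0 alpha (inord k) (gen k).
Proof.
move=> hk; split.
- split; last exact: gen_sum0.
  move=> a ha; apply: gen_ge0 => //; apply: contra ha => /eqP e.
  apply/eqP/val_inj; rewrite /= inordK //; lia.
- move=> e; have := congr1 (fun f => f (inord k)) e.
  by rewrite /= gen_at // => /eqP; rewrite oppr_eq0 oner_eq0.
- by rewrite sigmaA_fin ?gen_A // ltry.
move=> [nu1 [nu2 [t [[N1 N2] /andP[t0 t1] np e ha]]]].
have [A1 A2] := affine_imp _ _ ha.
have key : forall j, H j (gen k) = (1 - t) * H j nu1 + t * H j nu2.
  by move=> j; rewrite e /seg_point Hlin.
have z : forall j, (j < m)%N -> j != k -> H j nu1 = 0 /\ H j nu2 = 0.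
  move=> j hj hjk; apply: (@mix0 (1 - t) t); rewrite ?subr_gt0 //.
  - exact: Hge0 _ _ _ N1 A1.
  - exact: Hge0 _ _ _ N2 A2.
  by rewrite -key Hgen0.
have h1 := multM k nu1 hk N1.2 (fun j hj hjk => (z j hj hjk).1).
have h2 := multM k nu2 hk N2.2 (fun j hj hjk => (z j hj hjk).2).
apply: np.
set c2 := H k nu2 / H k (gen k) in h2.
have [c20|c2n0] := eqVneq c2 0.
  right; exists 0; apply/funext => a; by rewrite h2 c20 !mul0r.
left; exists ((H k nu1 / H k (gen k)) / c2); apply/funext => a.
by rewrite h1 h2 mulrA divfK.
Qed.

Lemma gen_Lambda k : (k < m)%N -> Lambda S0 alpha (gen k).
Proof. by move=> hk; exists (inord k); split; [exact: gen_circuit|exact: gen_at]. Qed.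

Lemma ff_gen k : (k < m)%N -> functional_form S0 alpha (gen k) = (gen k, 0).
Proof. by move=> hk; rewrite /functional_form sigmaA_fin // gen_A. Qed.

Lemma cone_good x : circuit_graph S0 alpha x ->
  [/\ \sum_a x.1 a = 0, forall j, 0 <= H j x.1 & 0 <= x.2].
Proof.
move=> [n [c [s [hc hS e1 e2]]]].
have hs : forall i, [/\ \sum_a (s i).1 a = 0, forall j, 0 <= H j (s i).1 & 0 <= (s i).2].
  move=> i; case: (hS i) => [[lam [beta [[hN hne hlt hnd] hb]] <-] | ->].
  - have hA := sigmaA_lt _ hlt.
    rewrite /functional_form /= sigmaA_fin //; split => //; first exact: hN.2.
    move=> j; exact: Hge0 _ _ _ hN hA.
  - split => //=; first by rewrite big1.
    by move=> j; rewrite /H big1 // => a _; rewrite mul0r.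
rewrite e1 e2 /=; split.
- rewrite exchange_big /=; apply: big1 => i _.
  by have [h _ _] := hs i; rewrite -mulr_sumr h mulr0.
- move=> j; rewrite /H; under eq_bigr do rewrite mulr_suml.
  rewrite exchange_big /=; apply: sumr_ge0 => i _.
  under eq_bigr do rewrite -mulrA.
  rewrite -mulr_sumr; apply: mulr_ge0 => //; have [_ h _] := hs i; exact: h.
- apply: sumr_ge0 => i _; apply: mulr_ge0 => //; by have [_ _ h] := hs i.
Qed.


Lemma ext_gen k : (k < m)%N ->
  extreme_ray (circuit_graph S0 alpha) (functional_form S0 alpha (gen k)).
Proof.
move=> hk; split.
- rewrite ff_gen // => /(congr1 fst) /= e; have := congr1 (fun f => f (inord k)) e.
  by rewrite /= gen_at // => /eqP; rewrite oppr_eq0 oner_eq0.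
- move=> q [t [t0 ->]].
  exists 1%N, (fun _ => t), (fun _ => functional_form S0 alpha (gen k)); split => //.
  + move=> i; left; exists (gen k) => //; exact: gen_Lambda.
  + by apply/funext => a /=; rewrite big_ord1.
  + by rewrite /= big_ord1.
move=> x y Gx Gy [t [t0 e]].
rewrite ff_gen // in e *.
have [sx Hx x2] := cone_good x Gx.
have [sy Hy y2] := cone_good y Gy.
clear Gx Gy; move: e sx Hx x2 sy Hy y2; case: x => x1 xx2; case: y => y1 yy2 /=.
rewrite /padd /= => e sx Hx x2 sy Hy y2.
have e1 := congr1 fst e; have e2 := congr1 snd e; simpl in e1, e2.
have ex2 : xx2 = 0 by rewrite mulr0 in e2; lra.
have ey2 : yy2 = 0 by rewrite mulr0 in e2; lra.
have hsum : forall j, H j x1 + H j y1 = t * H j (gen k).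
  move=> j; rewrite /H -big_split mulr_sumr; apply: eq_bigr => a _ /=.
  rewrite -mulrDl mulrA; congr (_ * _).
  by have := congr1 (fun f => f a) e1.
have zx : forall j, (j < m)%N -> j != k -> H j x1 = 0.
  move=> j hj hjk; have := hsum j; rewrite Hgen0 // mulr0.
  have := Hx j; have := Hy j; lra.
have zy : forall j, (j < m)%N -> j != k -> H j y1 = 0.
  move=> j hj hjk; have := hsum j; rewrite Hgen0 // mulr0.
  have := Hx j; have := Hy j; lra.
have hx := multM k x1 hk sx zx.
have hy := multM k y1 hk sy zy.
have hp := Hpos k hk.
split.
- exists (H k x1 / H k (gen k)); split; first by apply: divr_ge0 => //; exact: ltW.
  rewrite /= ex2 mulr0; congr pair; apply/funext => a; exact: hx.
- exists (H k y1 / H k (gen k)); split; first by apply: divr_ge0 => //; exact: ltW.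
  rewrite /= ey2 mulr0; congr pair; apply/funext => a; exact: hy.
Qed.

Lemma sub_gen lam : Lambda_star S0 alpha lam -> exists k, (k < m)%N /\ lam = gen k.
Proof.
move=> [[beta [[hN hne hlt hnd] hb]] [_ _ hext]].
have hA := sigmaA_lt _ hlt.
pose c : 'I_m.+1 -> R := fun i => if (i < m)%N then H i lam / H i (gen i) else 0.
pose gi (i : 'I_m.+1) := if (i < m)%N then val i else 0%N.
pose g' : 'I_m.+1 -> 'I_m.+1 -> R := fun i => gen (gi i).
have hc0 : forall i, 0 <= c i.
  move=> i; rewrite /c; case: ifP => // hi; apply: divr_ge0.
    exact: Hge0 _ _ _ hN hA.
  exact: ltW (Hpos _ hi).
have hg'i : forall i : 'I_m.+1, (i < m)%N -> g' i = gen i by move=> i hi; rewrite /g' /gi hi.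
have hg'm : forall i : 'I_m.+1, (gi i < m)%N by move=> i; rewrite /gi; case: ifP.
have dec : forall a, lam a = \sum_i c i * g' i a.
  have hu : forall a, 1 * lam a + (-1) * (\sum_i c i * g' i a) = 0.
    apply: injL.
    - rewrite Slin hN.2 exchange_big /= big1 ?mulr0 ?addr0 // => i _.
      by rewrite -mulr_sumr /g' gen_sum0 ?mulr0.
    - move=> j hj; rewrite Hlin.
      have -> : H j (fun a => \sum_i c i * g' i a) = \sum_i c i * H j (g' i).
        rewrite /H; under eq_bigr do rewrite mulr_suml.
        rewrite exchange_big; apply: eq_bigr => i _; rewrite mulr_sumr.
        by apply: eq_bigr => a _; rewrite mulrA.
      rewrite (bigD1 (inord j)) //= big1 ?addr0.
        rewrite hg'i /c /= inordK ?hj; try lia.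
        by rewrite divfK ?gt_eqF ?Hpos // mul1r mulN1r subrr.
      move=> i hi; rewrite /c; case: ifP => hi'; last by rewrite mul0r.
      rewrite hg'i // (Hgen0 j i) ?mulr0 //.
      apply: contra hi => /eqP e; apply/eqP/val_inj; rewrite /= inordK //; lia.
  move=> a; move: (hu a); rewrite mul1r mulN1r => /eqP; rewrite subr_eq0 => /eqP //.
have [i ci] : exists i, c i != 0.
  case/boolP: [exists i, c i != 0] => [/existsP //|/existsPn hall].
  exfalso; apply: hne; apply/funext => a; rewrite dec big1 // => i _.
  by move: (hall i); rewrite negbK => /eqP ->; rewrite mul0r.
have him : (i < m)%N by move: ci; rewrite /c; case: ifP => // _; rewrite eqxx.
have cpos : 0 < c i by rewrite lt_def ci hc0.
pose k := val i.
have hffl : functional_form S0 alpha lam = (lam, 0) by rewrite /functional_form sigmaA_fin.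
pose x := ((fun a => c i * gen k a), 0 : R).
pose y := ((fun a => \sum_l (if l == i then 0 else c l) * g' l a), 0 : R).
have Gx : circuit_graph S0 alpha x.
  exists 1%N, (fun _ => c i), (fun _ => functional_form S0 alpha (gen k)); split => //.
  - move=> _; left; exists (gen k) => //; exact: gen_Lambda.
  - by apply/funext => a /=; rewrite big_ord1.
  - by rewrite /= big_ord1 sigmaA_fin ?gen_A // mulr0.
have Gy : circuit_graph S0 alpha y.
  exists m.+1, (fun l => if l == i then 0 else c l),
    (fun l => functional_form S0 alpha (g' l)); split => //.
  - by move=> l; case: ifP.
  - move=> l; left; exists (g' l) => //; exact: gen_Lambda.
  - rewrite /= big1 // => l _; rewrite /g' sigmaA_fin ?gen_A ?mulr0 //.
have hxy : ray (functional_form S0 alpha lam) (padd x y).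
  exists 1; split => //; rewrite hffl /padd /=; congr pair; last by rewrite addr0 mulr0.
  apply/funext => a; rewrite mul1r dec (bigD1 i) //= eqxx mul0r add0r [in RHS](bigD1 i) //= hg'i //; congr (_ + _).
  by apply: eq_bigr => l hl; rewrite (negbTE hl).
have [[t [t0 ex]] _] := hext x y Gx Gy hxy.
rewrite hffl /x /= in ex; have ex1 := congr1 fst ex; simpl in ex1.
have hat : c i * gen k (inord k) = t * lam (inord k).
  by have := congr1 (fun f => f (inord k)) ex1.
rewrite gen_at // in hat.
have hkb : inord k = beta.
  case: (eqVneq (inord k) beta) => // hneq; have := mulr_ge0 t0 (hN.1 _ hneq); rewrite -hat mulrN1 oppr_ge0 => h; by move: cpos; rewrite ltNge h.
rewrite hkb hb in hat.
have tc : t = c i by lra.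
exists k; split => //; apply/funext => a.
have := congr1 (fun f => f a) ex1 => /=; rewrite tc => /(mulfI ci) -> //.
Qed.


Lemma main_sec :
  Lambda_star [set x : R | 0 <= x] alpha =
  [set nu | (exists i j : 'I_m.+1,
               [/\ val i = 0%N, val j = 1%N &
                   nu = (fun a => delta j a - delta i a)])
         \/ (exists i j k : 'I_m.+1,
               [/\ val j = (val i).+1, val k = (val j).+1 &
                   nu = (fun a =>
                     (alpha k - alpha j) / (alpha k - alpha i) * delta i a
                     + (alpha j - alpha i) / (alpha k - alpha i) * delta k a
                     - delta j a)])].
Proof.
apply/seteqP; split => nu.
- move=> /sub_gen [k [hk ->]].
  have [k0|k0] := eqVneq k 0%N.
  + left; exists (inord 0), (inord 1); split; rewrite /= ?inordK //; try lia.
    apply/funext => a; rewrite /gen k0 /= /delta /dN !eq_inord //; lia.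
  + right; exists (inord k.-1), (inord k), (inord k.+1); split; rewrite /= ?inordK //; try lia.
    apply/funext => a; rewrite /gen (negbTE k0) /delta /dN !eq_inord; try lia.
    by rewrite /al.
- case.
  + move=> [i [j [hi hj ->]]].
    have -> : (fun a => delta j a - delta i a) = gen 0.
      apply/funext => a; rewrite /gen /= /delta /dN -!val_eqE hi hj //.
    split; [exact: gen_Lambda | exact: ext_gen].
  + move=> [i [j [k [hj hk ->]]]].
    have hk' : nat_of_ord k = (nat_of_ord j).+1 := hk.
    have hj0 : (nat_of_ord j < m)%N by have := ltn_ord k; lia.
    have -> : (fun a => (alpha k - alpha j) / (alpha k - alpha i) * delta i a
                     + (alpha j - alpha i) / (alpha k - alpha i) * delta k a
                     - delta j a) = gen (val j).
      apply/funext => a; rewrite /gen.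
      have -> : (val j == 0%N) = false by rewrite hj.
      have e1 : inord (val j).+1 = k by rewrite -hk inord_val.
      have e2 : inord (val j).-1 = i by rewrite hj /= inord_val.
      have e3 : inord (val j) = j by rewrite inord_val.
      have e4 : (val j).-1 = val i by rewrite hj.
      by rewrite /al e1 e2 e3 /delta /dN -!val_eqE e4 -hk.
    split; [exact: gen_Lambda | exact: ext_gen].
Qed.

End Main.

Theorem mainTheorem20 (R : realType) (m : nat) (alpha : 'I_m -> R)
  (hm : (2 <= m)%N)
  (halpha : forall i j : 'I_m, (i < j)%N -> alpha i < alpha j) :
  Lambda_star [set x : R | 0 <= x] alpha =
  [set nu | (exists i j : 'I_m,
               [/\ val i = 0%N, val j = 1%N &
                   nu = (fun a => delta j a - delta i a)])
         \/ (exists i j k : 'I_m,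
               [/\ val j = (val i).+1, val k = (val j).+1 &
                   nu = (fun a =>
                     (alpha k - alpha j) / (alpha k - alpha i) * delta i a
                     + (alpha j - alpha i) / (alpha k - alpha i) * delta k a
                     - delta j a)])].
Proof.
case: m alpha hm halpha => [//|m] alpha hm halpha.
by apply: main_sec.
Qed.
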